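(* Let $n=2k$ and let $u_1,\ldots,u_k$ be pairwise distinct elements of $\mathbb{F}_{2^n}$ such that $u_iu_j^{2^k}\in\mathbb{F}_{2^k}^*$ for all $1\le i<j\le k$. Let $t$ be a positive integer, let $F_1,\ldots,F_t$ be reduced polynomials in $\mathbb{F}_2[X_1,\ldots,X_k]$, and set $f_i(x)=F_i(\mathrm{Tr}^n_1(u_1x),\ldots,\mathrm{Tr}^n_1(u_kx))$. Then $\widehat H(x)=(x^{2^k+1},f_1(x),\ldots,f_t(x))$ is a vectorial plateaued $(n,k+t)$-function if and only if the $(n,t)$-function $(f_1,\ldots,f_t)$ is vectorial plateaued.
   Context: $\mathrm{Tr}^n_1(x)=\sum_{i=0}^{n-1}x^{2^i}$; $x^{2^k+1}\in\mathbb{F}_{2^k}$. $\widehat H$ is viewed as a map $\mathbb{F}_{2^n}\to\mathbb{F}_{2^k}\times\mathbb{F}_2^t$ with components $\langle(u,v),\widehat H(x)\rangle=\mathrm{Tr}^k_1(ux^{2^k+1})+\sum_i v_if_i(x)$, $(u,v)\ne(0,0)$. A Boolean function $f$ is plateaued if $W_f(a)=\sum_x(-1)^{f(x)+\mathrm{Tr}^n_1(ax)}$ takes values in $\{0,\pm2^s\}$ for some $n/2\le s\le n$; a vectorial function is vectorial plateaued if all its components are plateaued. A reduced polynomial is a multilinear polynomial over $\mathbb{F}_2$. *)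

(* Defs.v *)
From HB Require Import structures.
From mathcomp Require Import all_boot all_order all_algebra all_field.
From mathcomp Require Import mpoly.
Set Implicit Arguments. Unset Strict Implicit. Unset Printing Implicit Defensive.
Import GRing.Theory Num.Theory.
Local Open Scope ring_scope.

Definition trF (F : finFieldType) (m : nat) (x : F) : F :=
  \sum_(i < m) x ^+ (2 ^ i).

(* The trace value (which lies in F_2 = {0,1} inside F) viewed in 'F_2. *)
Definition trB (F : finFieldType) (m : nat) (x : F) : 'F_2 :=
  if trF m x == 1 then 1 else 0.

Definition inSubF (F : finFieldType) (k : nat) (y : F) : bool :=
  y ^+ (2 ^ k) == y.

Definition sgnB (b : 'F_2) : int := if b == 0 then 1 else -1.

Definition walsh (F : finFieldType) (n : nat) (f : F -> 'F_2) (a : F) : int :=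
  \sum_(x : F) sgnB (f x + trB n (a * x)).

Definition plateaued (F : finFieldType) (n : nat) (f : F -> 'F_2) : Prop :=
  exists s : nat, (n <= 2 * s)%N /\ (s <= n)%N /\
    forall a : F, walsh n f a = 0 \/ `|walsh n f a| = (2 ^ s)%:Z.

Definition vplateaued (F : finFieldType) (n t : nat) (f : 'I_t -> F -> 'F_2) : Prop :=
  forall v : 'I_t -> 'F_2, (exists i, v i != 0) ->
    plateaued n (fun x => \sum_(i < t) v i * f i x).

(* Vectorial plateaued (n,k+t)-function Hhat(x) = (x^(2^k+1), f_1(x),...,f_t(x))
   with values in F_{2^k} x F_2^t: all components
   x |-> Tr^k_1(u x^(2^k+1)) + sum_i v_i f_i(x), (u,v) <> (0,0), u in F_{2^k},
   are plateaued. *)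
Definition vplateauedH (F : finFieldType) (n k t : nat) (f : 'I_t -> F -> 'F_2) : Prop :=
  forall (w : F) (v : 'I_t -> 'F_2), inSubF k w -> (w != 0 \/ exists i, v i != 0) ->
    plateaued n (fun x => trB k (w * x ^+ (2 ^ k + 1)) + \sum_(i < t) v i * f i x).

Definition reduced (k : nat) (P : {mpoly 'F_2[k]}) : Prop :=
  forall m, m \in msupp P -> forall j : 'I_k, (m j <= 1)%N.

Definition boolF (F : finFieldType) (n k : nat) (u : 'I_k -> F)
  (P : {mpoly 'F_2[k]}) (x : F) : 'F_2 :=
  P.@[fun j => trB n (u j * x)].

(* Main.v *)
Require Import Defs.
From HB Require Import structures.
From mathcomp Require Import all_boot all_order all_algebra all_field.
From mathcomp Require Import mpoly.
From mathcomp Require Import ring lra zify.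
Set Implicit Arguments. Unset Strict Implicit. Unset Printing Implicit Defensive.
Import GRing.Theory Num.Theory.
Local Open Scope ring_scope.

From Stdlib Require Import FunctionalExtensionality.
Section Char2.
Variable F : finFieldType.
Hypothesis c2 : 2 \in [pchar F].

Lemma frob2 (x y : F) : (x + y) ^+ 2 = x ^+ 2 + y ^+ 2.
Proof. by rewrite sqrrD mulrn_pchar // addr0. Qed.

Lemma frobD i (x y : F) : (x + y) ^+ (2 ^ i) = x ^+ (2 ^ i) + y ^+ (2 ^ i).
Proof.
elim: i x y => [|i IH] x y; first by rewrite !expr1.
by rewrite expnS !exprM frob2 IH.
Qed.

Lemma frob0 i : (0 : F) ^+ (2 ^ i) = 0.
Proof. by rewrite expr0n expn_eq0. Qed.

Lemma frobS i m (f : 'I_m -> F) :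
  (\sum_(j < m) f j) ^+ (2 ^ i) = \sum_(j < m) f j ^+ (2 ^ i).
Proof. exact: (big_morph (fun z => z ^+ (2 ^ i)) (frobD i) (frob0 i)). Qed.

Lemma trF_add m (x y : F) : trF m (x + y) = trF m x + trF m y.
Proof. by rewrite /trF -big_split; apply: eq_bigr => i _; apply: frobD. Qed.

Lemma trF0 m : trF m (0 : F) = 0.
Proof. by rewrite /trF big1 // => i _; apply: frob0. Qed.

Lemma trF_sqr m (z : F) : trF m z ^+ 2 = trF m (z ^+ 2).
Proof.
rewrite -(expn1 2) frobS /trF; apply: eq_bigr => i _.
by rewrite expn1 -!exprM mulnC.
Qed.

Lemma trF_shift m (z : F) : z ^+ (2 ^ m) = z -> trF m (z ^+ 2) = trF m z.
Proof.
move=> hz; apply: (@addrI _ z).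
have E1 := big_ord_recl m (fun i : 'I_m.+1 => z ^+ (2 ^ i)).
have E2 := big_ord_recr m (fun i : 'I_m.+1 => z ^+ (2 ^ i)).
rewrite /= expn0 expr1 in E1; rewrite /= hz in E2.
rewrite /trF. rewrite [in RHS]addrC -E2 E1. congr (_ + _); apply: eq_bigr => i _.
by rewrite /bump /= add1n expnS -exprM mulnC.
Qed.

Definition isbit (t : F) := (t == 0) || (t == 1).

Lemma bit_of_sq (t : F) : t ^+ 2 = t -> isbit t.
Proof.
move=> h; have : t * (t - 1) == 0 by rewrite mulrBr mulr1 -expr2 h subrr.
by rewrite mulf_eq0 subr_eq0.
Qed.

Lemma trF_bit m (z : F) : z ^+ (2 ^ m) = z -> isbit (trF m z).
Proof. by move=> hz; apply: bit_of_sq; rewrite trF_sqr trF_shift. Qed.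

Lemma bit_add (a b : F) : isbit a -> isbit b -> isbit (a + b).
Proof.
rewrite /isbit => /orP[]/eqP-> /orP[]/eqP->; rewrite ?addr0 ?add0r ?eqxx ?orbT //.
by rewrite addrr_pchar2 ?eqxx.
Qed.

Definition toB (t : F) : 'F_2 := if t == 1 then 1 else 0.

Lemma z1F : ((0 : F) == 1) = false.
Proof. by rewrite eq_sym oner_eq0. Qed.

Lemma toB0 : toB 0 = 0.
Proof. by rewrite /toB z1F. Qed.

Lemma toB1 : toB 1 = 1.
Proof. by rewrite /toB eqxx. Qed.

Lemma toB_add (a b : F) : isbit a -> isbit b -> toB (a + b) = toB a + toB b.
Proof.
rewrite /isbit => /orP[]/eqP-> /orP[]/eqP->;
  rewrite ?addr0 ?add0r ?toB0 ?toB1 ?addr0 ?add0r //.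
by rewrite addrr_pchar2 // toB0 addrr_pchar2 //; apply: pchar_Fp.
Qed.


Lemma trBE m (x : F) : trB m x = toB (trF m x).
Proof. by []. Qed.

End Char2.

Section Card.
Variable F : finFieldType.
Variable k : nat.
Hypothesis cardF : #|F| = (2 ^ (k + k))%N.

Lemma c2F : 2 \in [pchar F].
Proof. exact: (card_finPcharP cardF). Qed.

Lemma xn (x : F) : x ^+ (2 ^ (k + k)) = x.
Proof. by rewrite -cardF expf_card. Qed.

Lemma xqq (x : F) : (x ^+ (2 ^ k)) ^+ (2 ^ k) = x.
Proof. by rewrite -exprM -expnD xn. Qed.

Lemma trF_split (a : F) : trF (k + k) a = trF k a + trF k (a ^+ (2 ^ k)).
Proof.
rewrite /trF big_split_ord /=; congr (_ + _); apply: eq_bigr => i _ /=.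
by rewrite expnD exprM.
Qed.

Lemma TBbit (z : F) : isbit (trF (k + k) z).
Proof. by apply: trF_bit; [apply: c2F | apply: xn]. Qed.

Lemma TB_add (x y : F) : trB (k + k) (x + y) = trB (k + k) x + trB (k + k) y.
Proof. by rewrite !trBE trF_add ?toB_add //; try apply: c2F; apply: TBbit. Qed.

Lemma TB0 : trB (k + k) (0 : F) = 0.
Proof. by rewrite trBE trF0 ?toB0 //; apply: c2F. Qed.

Lemma trFn_frob i (z : F) : trF (k + k) (z ^+ (2 ^ i)) = trF (k + k) z.
Proof.
elim: i z => [|i IH] z; first by rewrite expr1.
rewrite expnS exprM IH; exact: (trF_shift (xn z)).
Qed.

Lemma k_gt0 : (0 < k)%N.
Proof.
case: k cardF => [|j] // h.
have : (1 < #|F|)%N by apply/card_gt1P; exists 0, 1; rewrite !inE eq_sym oner_eq0.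
by rewrite h.
Qed.

Lemma trace_surj : exists z : F, trF (k + k) z = 1.
Proof.
set n := (k + k)%N.
have n_gt0 : (0 < n)%N by rewrite /n; have := k_gt0; lia.
pose p : {poly F} := \sum_(i < n) 'X^(2 ^ i).
have pE x : p.[x] = trF n x.
  by rewrite /p horner_sum /trF; apply: eq_bigr => i _; rewrite hornerXn.
have p1 : p`_1 = 1.
  rewrite /p coef_sum (bigD1 (Ordinal n_gt0)) //= coefXn expn0 eqxx big1 ?addr0 //.
  move=> [[|j] hj] //=; rewrite coefXn expnS.
  by have -> : (1 == 2 * 2 ^ j)%N = false by apply/negbTE/eqP; lia.
have pn0 : p != 0 by apply/eqP => p0; move: p1; rewrite p0 coef0 => /eqP; rewrite eq_sym oner_eq0.
have psz : (size p <= (2 ^ n.-1).+1)%N.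
  apply: leq_trans (size_sum _ _ _) _; apply/bigmax_leqP => i _.
  rewrite size_polyXn ltnS leq_pexp2l //; have := ltn_ord i; lia.
have [z /eqP hz|hnone] := pickP (fun z : F => trF n z == 1); first by exists z.
have := max_poly_roots pn0 _ (enum_uniq F).
rewrite -cardE cardF.
have -> : all (root p) (enum F).
  apply/allP => x _; rewrite /root pE.
  have := TBbit x; rewrite /isbit -/n; have := hnone x; rewrite /= => -> ; rewrite orbF.
  by [].
move=> /(_ isT) hlt.
have := leq_trans hlt psz.
have e : (2 ^ n = 2 * 2 ^ n.-1)%N by rewrite -expnS prednK.
rewrite e; have := expn_gt0 2 n.-1; lia.
Qed.

End Card.
Lemma F2_cases (b : 'F_2) : b = 0 \/ b = 1.
Proof. case: b => [[|[|m]] Hm]; [left|right|by []]; exact: val_inj. Qed.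

Lemma sgnB_add (b c : 'F_2) : sgnB (b + c) = sgnB b * sgnB c.
Proof. by case: (F2_cases b) => ->; case: (F2_cases c) => ->. Qed.

Lemma F2c : 2 \in [pchar 'F_2].
Proof. exact: pchar_Fp. Qed.

Lemma sgnB1 (b : 'F_2) : sgnB (b + 1) = - sgnB b.
Proof. by case: (F2_cases b) => ->. Qed.

Lemma F2xx (b : 'F_2) : b + b = 0.
Proof. exact: (addrr_pchar2 F2c). Qed.

Lemma F2_id3 (a b c : 'F_2) : a + b + c + a = b + c.
Proof.
by rewrite addrAC [a + b + a]addrAC F2xx add0r.
Qed.

Section Bent.
Variable F : finFieldType.
Variable k : nat.
Hypothesis cardF : #|F| = (2 ^ (k + k))%N.
Variables (u0 w : F) (g : F -> 'F_2).
Hypothesis hw : w ^+ (2 ^ k) = w.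
Hypothesis w0 : w != 0.
Hypothesis hg : forall x c, (u0 * c) ^+ (2 ^ k) = u0 * c -> g (x + c) = g x.

Local Notation q := (2 ^ k)%N.
Local Notation n := (k + k)%N.
Definition Qf (x : F) := trB k (w * x ^+ (q + 1)).
Definition hf (x : F) := Qf x + g x.

Lemma Nbit (y : F) : isbit (trF k (w * y ^+ (q + 1))).
Proof.
apply: (trF_bit (c2F cardF)); rewrite exprMn hw -exprM mulnC exprM exprD expr1 (xqq cardF).
by rewrite exprD expr1 (mulrC y).
Qed.

Lemma Qid x e : Qf (x + e) + Qf x = Qf e + trB n (w * e ^+ q * x).
Proof.
have c2 := c2F cardF.
set z := w * e ^+ q * x.
have zq : z ^+ q = w * e * x ^+ q by rewrite /z !exprMn hw (xqq cardF).
have E : w * (x + e) ^+ (q + 1) = w * x ^+ (q + 1) + w * e ^+ (q + 1) + (z + z ^+ q).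
  by rewrite zq /z !exprD !expr1 (frobD c2); ring.
have E2 : trF k (z + z ^+ q) = trF n z by rewrite trF_split (trF_add c2).
rewrite /Qf !trBE E [trF k (_ + (z + _))](trF_add c2) E2 (trF_add c2) !(toB_add c2) //; try apply: bit_add => //;
  try apply: Nbit; try apply: (TBbit cardF).
set b1 := toB _; set b2 := toB _; set b3 := toB _.
exact: F2_id3.
Qed.


Lemma TBz (z : F) : trF n z = 1 -> trB n z = 1.
Proof. by move=> h; rewrite trBE h /toB eqxx. Qed.

Lemma shift_exists e : e != 0 ->
  exists2 c, trB n (w * e ^+ q * c) = 1 &
    forall x, g (x + c) + g (x + c + e) = g x + g (x + e).
Proof.
move=> e0.
have c2 := c2F cardF.
have [z0 hz0] := trace_surj cardF.
have b0 : w * e ^+ q != 0 by rewrite mulf_neq0 // expf_neq0.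
have [hA|hB] := eqVneq ((u0 * e) ^+ q) (u0 * e).
  have ge y : g (y + e) = g y by apply: hg.
  exists (z0 / (w * e ^+ q)).
    by rewrite mulrC divfK // TBz.
  by move=> x; rewrite !ge !F2xx.
have u00 : u0 != 0.
  by apply: contraNneq hB => ->; rewrite mul0r expr0n expn_eq0.
set y := w * e ^+ q / u0.
set d := y + y ^+ q.
have d0 : d != 0.
  apply: contraNneq hB => /eqP; rewrite addr_eq0 (oppr_pchar2 c2) => /eqP hy.
  have H : w * e / u0 ^+ q = w * e ^+ q / u0.
    by rewrite -[RHS]/y hy /y !exprMn exprVn hw (xqq cardF).
  have uq0 : u0 ^+ q != 0 by rewrite expf_neq0.
  apply/eqP; rewrite exprMn; move: H uq0; move: (u0 ^+ q) (e ^+ q) => A B H A0.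
  have -> : A * B = (w * B / u0) * u0 * A / w by field; rewrite w0 u00.
  by rewrite -H; field; rewrite w0 A0.
set z := z0 / d.
exists ((z + z ^+ q) / u0).
  have E1 : w * e ^+ q * ((z + z ^+ q) / u0) = y * z + (y ^+ q * z) ^+ q.
    rewrite [(y ^+ q * z) ^+ q]exprMn (xqq cardF) /y; move: (z ^+ q) => Z; by field.
  rewrite E1 (TB_add cardF) [trB n ((_ * z) ^+ _)]trBE (trFn_frob cardF) -trBE -(TB_add cardF).
  rewrite -mulrDl -/d /z mulrC divfK //; exact: TBz.
have hc : (u0 * ((z + z ^+ q) / u0)) ^+ q = u0 * ((z + z ^+ q) / u0).
  by rewrite mulrC divfK // (frobD c2) (xqq cardF) addrC.
move=> x; rewrite (addrAC x). rewrite (hg _ hc). rewrite (hg _ hc). done.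
Qed.


Lemma hpair e y : hf y + hf (y + e) = Qf e + trB n (w * e ^+ q * y) + (g y + g (y + e)).
Proof. by rewrite -Qid /hf; ring. Qed.

Lemma key a e : e != 0 ->
  \sum_(x : F) sgnB (hf x + hf (x + e) + trB n (a * e)) = 0.
Proof.
move=> e0; have [c hc1 hc2] := shift_exists e0.
have A x : hf (x + c) + hf (x + c + e) = hf x + hf (x + e) + 1.
  rewrite !hpair mulrDr (TB_add cardF) hc1 hc2; ring.
set S := \sum_(x : F) _.
have : S = - S.
  rewrite {1}/S (reindex_inj (can_inj (addrK c))) /= -sumrN; apply: eq_bigr => x _.
  by rewrite A -sgnB1; congr sgnB; ring.
move=> hS; have : S + S = 0 by rewrite {1}hS addNr.
lia.
Qed.

Lemma walsh_sq a : walsh n hf a * walsh n hf a = (2 ^ n)%:Z.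
Proof.
rewrite /walsh mulr_suml.
transitivity (\sum_(e : F) \sum_(x : F) sgnB (hf x + hf (x + e) + trB n (a * e))).
  rewrite exchange_big /=; apply: eq_bigr => x _.
  rewrite mulr_sumr (reindex_inj (can_inj (addKr x))) /=; apply: eq_bigr => e _.
  rewrite -sgnB_add; congr sgnB; rewrite mulrDr (TB_add cardF).
  set A := hf x; set B := hf (x + e); set T1 := trB n (a * x); set T2 := trB n (a * e).
  have -> : A + T1 + (B + (T1 + T2)) = (A + B + T2) + (T1 + T1) by ring.
  by rewrite F2xx addr0.
rewrite (bigD1 0) //= [X in _ + X]big1 ?addr0; last by move=> e he; rewrite (key a he).
under eq_bigr => x _ do rewrite addr0 F2xx mulr0 (TB0 F k) addr0.
rewrite sumr_const (_ : #|xpredT| = #|F|) // cardF -natz; congr (_ *+ _).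
Qed.

Lemma bent a : `|walsh n hf a| = (2 ^ k)%:Z.
Proof.
have h := walsh_sq a.
have : (walsh n hf a) ^+ 2 == ((2 ^ k)%:Z) ^+ 2.
  by rewrite expr2 h expr2 -PoszM -expnD.
rewrite eqf_sqr => /orP[]/eqP->; by rewrite ?normrN.
Qed.

End Bent.
Unset Implicit Arguments.
Lemma plateaued_ext (F : finFieldType) n (f f' : F -> 'F_2) :
  f =1 f' -> plateaued n f -> plateaued n f'.
Proof.
move=> e [s [h1 [h2 h3]]]; exists s; split => //; split => // a.
have -> : walsh n f' a = walsh n f a.
  by rewrite /walsh; apply: eq_bigr => x _; rewrite e.
exact: h3.
Qed.

Lemma trB_0k (F : finFieldType) k (y : F) : trB k (0 * y) = 0.
Proof. by rewrite mul0r trBE trF0 toB0. Qed.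

Theorem corollary5 (F : finFieldType) (n k t : nat) (u : 'I_k -> F)
    (P : 'I_t -> {mpoly 'F_2[k]}) :
  n = (2 * k)%N ->
  #|F| = (2 ^ n)%N ->
  injective u ->
  (forall i j : 'I_k, (i < j)%N ->
     u i * u j ^+ (2 ^ k) != 0 /\ inSubF k (u i * u j ^+ (2 ^ k))) ->
  (0 < t)%N ->
  (forall i, reduced (P i)) ->
  vplateauedH n k (fun i => boolF n u (P i)) <->
  vplateaued n (fun i => boolF n u (P i)).
Proof.
move=> hn cardF _ hu _ _.
have hkk : (2 * k = k + k)%N by rewrite mul2n addnn.
subst n; rewrite hkk in cardF *.
have c2 := c2F cardF.
split.
  move=> H v hv; apply: plateaued_ext (H 0 v _ _) => //.
  - by move=> x /=; rewrite trB_0k add0r.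
  - by rewrite /inSubF expr0n expn_eq0.
  - by right.
move=> H w v hw hwv; have [w0|w0] := eqVneq w 0.
  subst w; case: hwv => [/eqP //|hv].
  apply: plateaued_ext (H v hv) => x /=; by rewrite trB_0k add0r.
have i0lt := k_gt0 cardF.
set i0 : 'I_k := Ordinal i0lt.
set g := fun x => \sum_(i < t) v i * boolF (k + k) u (P i) x.
have hg : forall x c, (u i0 * c) ^+ (2 ^ k) = u i0 * c -> g (x + c) = g x.
  move=> x c hc.
  have hj j : (u j * c) ^+ (2 ^ k) = u j * c.
    have [ej|nej] := eqVneq (val j) 0%N.
      by have -> : j = i0 by apply: val_inj.
    have hj0 : (i0 < j)%N by rewrite /= lt0n.
    have [hnz hin] := hu i0 j hj0.
    move: hin; rewrite /inSubF exprMn (xqq cardF) => /eqP HB.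
    have u00 : u i0 != 0 by move: hnz; rewrite mulf_eq0 negb_or => /andP[].
    have A0 : u i0 ^+ (2 ^ k) != 0 by rewrite expf_neq0.
    move: hc; rewrite exprMn => HC.
    rewrite exprMn; apply: (mulfI A0).
    by rewrite mulrCA HC mulrA (mulrC _ (u i0)) -HB mulrA.
  have hz j : trB (k + k) (u j * c) = 0.
    by rewrite trBE trF_split (hj j) (addrr_pchar2 c2) toB0.
  rewrite /g; apply: eq_bigr => i _; congr (_ * _); rewrite /boolF.
  congr (meval _ _); apply: functional_extensionality => j.
  by rewrite mulrDr (TB_add cardF) hz addr0.
exists k; split; first by lia.
split; first by lia.
move=> a; right.
have hw' : w ^+ (2 ^ k) = w by apply/eqP.
exact: (bent cardF hw' w0 hg a).
Qed.
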